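(* Let $A$, $Q$, $H\subseteq A^Q$ be non-empty finite sets, $n\ge3$, $\mathcal F$ a clone with carrier $A$ satisfying $\Delta^s_n$, and suppose $H\in\mathrm{Inv}_Q\mathcal F$. Let $P=\{p,q\}\in[Q]^2$ with $P\not\subseteq Q^{(n)}_H$. Then either (1) $H|_P=\{g\in A^P:g(p)\in H(p),\ g(q)\in H(q)\}$, or (2) there is $\sigma\in S_A$ with $H|_P=\{g\in A^P: g(p)\in H(p),\ g(q)\in H(q),\ g(q)=\sigma(g(p))\}$.
   Context: $\mathcal O(A)=\bigcup_{n<\omega}A^{A^n}$; $\mathcal F_{[n]}=\mathcal F\cap A^{A^n}$; $\mathrm{ran}\,\mathbf x$ is the set of entries of $\mathbf x\in A^n$; $A^n_k=\{\mathbf x\in A^n:|\mathrm{ran}\,\mathbf x|=k\}$, $A^n_{<n}=\bigcup_{k<n}A^n_k$. A clone with carrier $A$ is a subset of $\mathcal O(A)$ containing all projections and closed under composition. For $f\in\mathcal O(A)_{[m]}$, $h_i\in A^Q$, $f(h_0,\dots,h_{m-1})$ is $q\mapsto f(h_0(q)\dots h_{m-1}(q))$; $\mathrm{Inv}_Q\mathcal F$ is the set of $H\subseteq A^Q$ closed under such compositions with $f\in\mathcal F$. $H(q)=\{h(q):h\in H\}$, $H|_P=\{h|_P:h\in H\}$, $[Q]^2$ the 2-element subsets of $Q$, $S_A$ the permutations of $A$, $Q^{(n)}_H=\{q\in Q:|H(q)|<n\}$. $\mathcal F$ satisfies $\Delta^s_n$ if there is $i<n$ such that for every $\mathbf a\in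 A^n_n$ and $a\in\mathrm{ran}\,\mathbf a$ there is $s\in\mathcal F_{[n]}$ with $s(\mathbf a)=a$ and $s(\mathbf x)=x_i$ for all $\mathbf x\in A^n_{<n}$. *)

(* Defs.v *)
From mathcomp Require Import all_boot all_fingroup.
Set Implicit Arguments. Unset Strict Implicit. Unset Printing Implicit Defensive.

Section Defs.
Variable A : finType.

Definition op (k : nat) := {ffun {ffun 'I_k -> A} -> A}.

Definition is_clone (F : forall k, {set op k}) : Prop :=
  (forall k (i : 'I_k), [ffun x : {ffun 'I_k -> A} => x i] \in F k) /\
  (forall m k (f : op m) (g : 'I_m -> op k),
      f \in F m -> (forall i, g i \in F k) ->
      [ffun x : {ffun 'I_k -> A} => f [ffun i => g i x]] \in F k).

Definition ran k (x : {ffun 'I_k -> A}) : {set A} := [set x i | i : 'I_k].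

Definition DeltaS (n : nat) (F : forall k, {set op k}) : Prop :=
  exists i : 'I_n, forall a : {ffun 'I_n -> A}, #|ran a| = n ->
    forall b, b \in ran a ->
      exists2 s : op n, s \in F n &
        s a = b /\ forall x : {ffun 'I_n -> A}, #|ran x| < n -> s x = x i.

Variable Q : finType.

Definition inInv (F : forall k, {set op k}) (H : {set {ffun Q -> A}}) : Prop :=
  forall m (f : op m) (h : 'I_m -> {ffun Q -> A}),
    f \in F m -> (forall i, h i \in H) ->
    [ffun q => f [ffun i => h i q]] \in H.

Definition proj (H : {set {ffun Q -> A}}) (q : Q) : {set A} := [set h q | h : {ffun Q -> A} in H].

Definition Qn (H : {set {ffun Q -> A}}) (n : nat) : {set Q} :=
  [set q | #|proj H q| < n].

Definition restr (H : {set {ffun Q -> A}}) (P : {set Q}) :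
  {set {ffun {x : Q | x \in P} -> A}} :=
  [set [ffun x : {x : Q | x \in P} => h (val x)] | h : {ffun Q -> A} in H].

Definition pt1 (p q : Q) : {x : Q | x \in [set p; q]} := exist _ p (set21 p q).
Definition pt2 (p q : Q) : {x : Q | x \in [set p; q]} := exist _ q (set22 p q).
End Defs.

(* Main.v *)
Require Import Defs.
From mathcomp Require Import all_boot all_fingroup.
From mathcomp Require Import zify.
Set Implicit Arguments. Unset Strict Implicit. Unset Printing Implicit Defensive.

Lemma all2_size (T : Type) (r : T -> T -> bool) s t : all2 r s t -> size s = size t.
Proof. by elim: s t => [|x s IH] [|y t] //= /andP[_ /IH ->]. Qed.

Lemma all2_nth (T : Type) (r : T -> T -> bool) d s t : all2 r s t ->
  forall k, k < size s -> r (nth d s k) (nth d t k).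
Proof.
elim: s t => [|x s IH] [|y t] //= /andP[rxy H] [|k] //= ks.
exact: IH.
Qed.

Lemma all2_flip (T : Type) (r : T -> T -> bool) s t :
  all2 r s t = all2 (fun a b => r b a) t s.
Proof. by elim: s t => [|x s IH] [|y t] //=; rewrite IH. Qed.

Section Comb.
Variables (A : finType) (n : nat) (R : rel A) (X Y : {set A}).
Hypothesis n3 : 3 <= n.
Hypothesis HRX : forall a b, R a b -> a \in X.
Hypothesis HRY : forall a b, R a b -> b \in Y.
Hypothesis HX : forall a, a \in X -> exists b, R a b.
Hypothesis HY : forall b, b \in Y -> exists a, R a b.
Hypothesis C1 : forall (su : seq A) y0 sv, size su = n -> uniq su ->
  ~~ uniq (y0 :: sv) -> all2 R su (y0 :: sv) -> forall x, x \in su -> R x y0.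
Hypothesis C2 : forall x0 (su sv : seq A), size sv = n -> uniq sv ->
  ~~ uniq (x0 :: su) -> all2 R (x0 :: su) sv -> forall y, y \in sv -> R x0 y.
Hypothesis HXn : n <= #|X|.

Definition nb (a : A) := odflt a [pick b | R a b].

Lemma nbP a : a \in X -> R a (nb a).
Proof.
move=> aX; rewrite /nb; case: pickP => [b //|H0].
by have [b Hb] := HX aX; move: (H0 b); rewrite Hb.
Qed.

Lemma all2_nb s : {subset s <= X} -> all2 R s (map nb s).
Proof.
elim: s => [|x s IH] //= sub; rewrite nbP ?sub ?mem_head //=.
by apply: IH => y ys; apply: sub; rewrite inE ys orbT.
Qed.

Lemma build x0 x1 x2 y0 y1 y2 : uniq [:: x0; x1; x2] ->
  R x0 y0 -> R x1 y1 -> R x2 y2 -> ~~ uniq [:: y0; y1; y2] ->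
  forall x, x \in [:: x0; x1; x2] -> R x y0.
Proof.
move=> ux r0 r1 r2 uy x xin.
set B := [set z in [:: x0; x1; x2]].
set S := X :\: B.
have cB : #|B| <= 3.
  by rewrite /B cardsE; apply: card_size.
have cX : #|X :&: B| <= 3 by apply: leq_trans cB; apply: subset_leq_card; apply: subsetIr.
have cS : n - 3 <= #|S| by rewrite /S cardsD; lia.
set rest := take (n - 3) (enum S).
have srest : size rest = n - 3 by rewrite size_takel // -cardE.
have restS : {subset rest <= S} by move=> z /mem_take; rewrite mem_enum.
apply: (C1 (su := [:: x0, x1, x2 & rest]) (sv := [:: y1, y2 & map nb rest])).
- by rewrite /= srest; lia.
- rewrite -[_ :: _]/([:: x0; x1; x2] ++ rest) cat_uniq ux take_uniq ?enum_uniq // andbT.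
  apply/hasPn => z /restS; rewrite /S in_setD => /andP[zB _].
  by apply: contra zB => zin; rewrite /B inE.
- apply: contra uy; rewrite -[_ :: _]/([:: y0; y1; y2] ++ map nb rest) cat_uniq.
  by case/and3P.
- rewrite /= r0 r1 r2 /=; apply: all2_nb => z /restS; rewrite /S in_setD.
  by case/andP.
- by rewrite -[_ :: _]/([:: x0; x1; x2] ++ rest) mem_cat xin.
Qed.

Lemma L_full : (exists a1 a2 c, [/\ a1 != a2, R a1 c & R a2 c]) ->
  forall a b, a \in X -> b \in Y -> R a b.
Proof.
move=> [a1 [a2 [c [ne r1 r2]]]].
have step1 : forall a, a \in X -> R a c.
  move=> a aX.
  case: (eqVneq a a1) => [-> //|n1]; case: (eqVneq a a2) => [-> //|n2].
  apply: (@build a1 a2 a c c (nb a)) => //.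
  - by rewrite /= !inE negb_or ne eq_sym n1 eq_sym n2.
  - exact: nbP.
  - by rewrite /= inE eqxx.
  - by rewrite !inE eqxx !orbT.
move=> a b aX bY.
have [a' ra'] := HY bY.
case: (eqVneq a a') => [-> //|na].
have : 0 < #|X :\: [set a'; a]|.
  rewrite cardsD; have : #|X :&: [set a'; a]| <= 2.
    by apply: leq_trans (subset_leq_card (subsetIr _ _)) _; rewrite cards2; case: (_ != _).
  lia.
case/card_gt0P => a3; rewrite in_setD !inE negb_or => /andP[/andP[n3a' n3a] a3X].
apply: (@build a' a a3 b c c) => //.
- by rewrite /= !inE negb_or eq_sym na eq_sym n3a' eq_sym n3a.
- exact: step1.
- exact: step1.
- by rewrite /= !inE eqxx /= ?orbT ?andbF.
- by rewrite !inE eqxx ?orbT.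
Qed.

End Comb.

Lemma comb_X (A : finType) n (R : rel A) (X Y : {set A}) :
  3 <= n ->
  (forall a b, R a b -> a \in X) ->
  (forall a b, R a b -> b \in Y) ->
  (forall a, a \in X -> exists b, R a b) ->
  (forall b, b \in Y -> exists a, R a b) ->
  (forall (su : seq A) y0 sv, size su = n -> uniq su ->
    ~~ uniq (y0 :: sv) -> all2 R su (y0 :: sv) -> forall x, x \in su -> R x y0) ->
  (forall x0 (su sv : seq A), size sv = n -> uniq sv ->
    ~~ uniq (x0 :: su) -> all2 R (x0 :: su) sv -> forall y, y \in sv -> R x0 y) ->
  n <= #|X| ->
  (forall a b, a \in X -> b \in Y -> R a b) \/
  exists sigma : {perm A}, forall a b, R a b = [&& a \in X, b \in Y & b == sigma a].
Proof.
move=> n3 HRX HRY HX HY C1 C2 HXn.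
case: (boolP [exists a1, exists a2, exists c, [&& a1 != a2, R a1 c & R a2 c]]).
  move/existsP => [a1 /existsP [a2 /existsP [c /and3P [ne r1 r2]]]].
  left; apply: (L_full n3 HX HY C1 HXn); by exists a1, a2, c; split.
move=> Hn.
have U1 : forall a1 a2 c, R a1 c -> R a2 c -> a1 = a2.
  move=> a1 a2 c r1 r2; apply/eqP; apply: contraNT Hn => ne.
  by apply/existsP; exists a1; apply/existsP; exists a2; apply/existsP; exists c; rewrite ne r1 r2.
set f := nb R.
have fP : forall a, a \in X -> R a (f a) := nbP HX.
have finj : {in X &, injective f}.
  by move=> a1 a2 a1X a2X e; apply: (U1 _ _ (f a1) (fP _ a1X)); rewrite e; apply: fP.
have cXY0 : #|X| <= #|Y|.
  rewrite -(card_in_imset finj); apply: subset_leq_card; apply/subsetP => b.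
  by case/imsetP => a aX ->; exact: (HRY _ _ (fP _ aX)).
have U2 : forall a b1 b2, R a b1 -> R a b2 -> b1 = b2.
  move=> a b1 b2 r1 r2; apply/eqP; apply/negP => /negP ne.
  have full := (L_full (R := fun b a => R a b) n3 HY HX
     (fun su y0 sv s1 s2 s3 s4 => C2 y0 sv su s1 s2 s3 (etrans (all2_flip _ _ _) s4))
     (leq_trans HXn cXY0)).
  have full' : forall a b, a \in X -> b \in Y -> R a b.
    move=> a' b' a'X b'Y; apply: full => //; by exists b1, b2, a; split.
  have : 1 < #|X| by lia.
  case/card_gt1P => [x1 [x2 [x1X x2X nx]]].
  have : 0 < #|Y| by lia.
  case/card_gt0P => y yY.
  by move/eqP: nx; apply; apply: (U1 _ _ y); apply: full'.
right.
have fXY : f @: X = Y.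
  apply/setP => b; apply/imsetP/idP => [[a aX ->]|bY]; first exact: (HRY _ _ (fP _ aX)).
  have [a ra] := HY _ bY; have aX := HRX _ _ ra.
  by exists a => //; apply: (U2 _ _ _ ra (fP _ aX)).
have cXY : #|X| = #|Y| by rewrite -fXY card_in_imset.
set sX := enum (~: X); set sY := enum (~: Y).
have ssz : size sX = size sY.
  rewrite /sX /sY -!cardE; have := cardsC X; have := cardsC Y; rewrite cXY; lia.
pose g a := if a \in X then f a else nth a sY (index a sX).
have gout : forall a, a \notin X -> g a \notin Y.
  move=> a aX; rewrite /g (negbTE aX).
  have : nth a sY (index a sX) \in sY by rewrite mem_nth // -ssz index_mem mem_enum inE.
  by rewrite mem_enum inE.
have ginj : injective g.
  move=> a1 a2.
  case: (boolP (a1 \in X)) => a1X; case: (boolP (a2 \in X)) => a2X.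
  - by rewrite /g a1X a2X; apply: finj.
  - move=> e; have := gout _ a2X; rewrite -e /g a1X.
    by rewrite (HRY _ _ (fP _ a1X)).
  - move=> e; have := gout _ a1X; rewrite e /g a2X.
    by rewrite (HRY _ _ (fP _ a2X)).
  - rewrite /g (negbTE a1X) (negbTE a2X) => e.
    have i1 : index a1 sX < size sY by rewrite -ssz index_mem mem_enum inE.
    have i2 : index a2 sX < size sY by rewrite -ssz index_mem mem_enum inE.
    have := e; rewrite (set_nth_default a1 a2 i2) => e'.
    move/eqP: e'; rewrite nth_uniq ?enum_uniq // => /eqP e2.
    have m2 : a2 \in sX by rewrite mem_enum inE.
    have m1 : a1 \in sX by rewrite mem_enum inE.
    by have := nth_index a1 m2; rewrite -e2 nth_index.
exists (perm ginj) => a b; rewrite permE.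
apply/idP/idP.
  move=> r; have aX := HRX _ _ r.
  by rewrite aX (HRY _ _ r) /g aX (U2 _ _ _ r (fP _ aX)) eqxx.
case/and3P => aX _; rewrite /g aX => /eqP ->; exact: fP.
Qed.

Section TF.
Variables (A : finType) (n : nat) (i i0 : 'I_n) (d : A).
Definition tf (s : seq A) : {ffun 'I_n -> A} := [ffun j => nth d s (tperm i i0 j)].

Lemma tf_uniq s : size s = n -> uniq s -> #|ran (tf s)| = n.
Proof.
move=> sz us; rewrite /ran card_imset ?card_ord //.
move=> j1 j2; rewrite !ffunE => /eqP; rewrite nth_uniq ?sz ?ltn_ord //.
by move/eqP/val_inj/perm_inj.
Qed.

Lemma tf_nuniq s : size s = n -> ~~ uniq s -> #|ran (tf s)| < n.
Proof.
move=> sz us; rewrite ltn_neqAle.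
have le : #|ran (tf s)| <= n by rewrite -[n in _ <= n]card_ord /ran leq_imset_card.
rewrite le andbT; apply: contra us => e.
have : #|[set tf s j | j : 'I_n]| == #|'I_n| by rewrite card_ord.
move/imset_injP => inj.
apply/(uniqP d) => m1 m2; rewrite !inE sz => h1 h2 e'.
have := inj (tperm i i0 (Ordinal h1)) (tperm i i0 (Ordinal h2)) isT isT.
rewrite !ffunE !tpermK => /(_ e') /perm_inj.
by case.
Qed.

Lemma tf_i s : tf s i = nth d s i0.
Proof. by rewrite ffunE tpermL. Qed.

Lemma tf_mem s x : size s = n -> x \in s -> exists k, tf s k = x.
Proof.
move=> sz xs; have h : index x s < n by rewrite -sz index_mem.
by exists (tperm i i0 (Ordinal h)); rewrite ffunE tpermK /= nth_index.
Qed.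
End TF.

Section Main.
Variables (A Q : finType) (H : {set {ffun Q -> A}}) (F : forall k, {set op A k}) (p q : Q).
Definition RR : rel A := fun a b => [exists h in H, (h p == a) && (h q == b)].

Hypothesis Hinv : inInv F H.

Lemma closure_ffun n (s : op A n) : s \in F n -> forall u v : {ffun 'I_n -> A},
  (forall j, RR (u j) (v j)) -> RR (s u) (s v).
Proof.
move=> sF u v Huv.
pose hh j := odflt [ffun _ => u j] [pick h in H | (h p == u j) && (h q == v j)].
have hhP : forall j, [/\ hh j \in H, hh j p = u j & hh j q = v j].
  move=> j; rewrite /hh; case: pickP => [h /andP[hH /andP[/eqP -> /eqP ->]] //|H0].
  by have := Huv j; case/existsP => h /andP[hH e]; move: (H0 h); rewrite hH e.
have gH := Hinv sF (h := hh) (fun j => let: And3 x _ _ := hhP j in x).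
apply/existsP; exists [ffun q' => s [ffun j => hh j q']]; rewrite gH /= !ffunE; apply/andP; split; apply/eqP; congr (s _);
  apply/ffunP => j; rewrite !ffunE; by case: (hhP j).
Qed.

Variable n : nat.
Hypothesis n3 : 3 <= n.
Hypothesis HD : DeltaS n F.

Lemma C1gen (su : seq A) y0 sv : size su = n -> uniq su ->
    ~~ uniq (y0 :: sv) -> all2 RR su (y0 :: sv) -> forall x, x \in su -> RR x y0.
Proof.
move=> sz us nu a2 x xs.
have n0 : 0 < n by lia.
have [i Hi] := HD.
set i0 : 'I_n := Ordinal n0.
have sz2 : size (y0 :: sv) = n by rewrite -(all2_size a2).
have [k ek] := tf_mem i i0 x sz xs.
have xr : x \in ran (tf i i0 x su) by apply/imsetP; exists k.
have [s sF [e1 e2]] := Hi _ (tf_uniq i i0 x sz us) x xr.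
have := closure_ffun sF (u := tf i i0 x su) (v := tf i i0 x (y0 :: sv)).
rewrite e1 e2 ?tf_nuniq // tf_i /=; apply => j; rewrite !ffunE.
by apply: all2_nth => //; rewrite sz.
Qed.

Lemma C2gen x0 (su sv : seq A) : size sv = n -> uniq sv ->
    ~~ uniq (x0 :: su) -> all2 RR (x0 :: su) sv -> forall y, y \in sv -> RR x0 y.
Proof.
move=> sz us nu a2 y ys.
have n0 : 0 < n by lia.
have [i Hi] := HD.
set i0 : 'I_n := Ordinal n0.
have sz2 : size (x0 :: su) = n by rewrite (all2_size a2).
have [k ek] := tf_mem i i0 y sz ys.
have yr : y \in ran (tf i i0 y sv) by apply/imsetP; exists k.
have [s sF [e1 e2]] := Hi _ (tf_uniq i i0 y sz us) y yr.
have := closure_ffun sF (u := tf i i0 y (x0 :: su)) (v := tf i i0 y sv).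
rewrite e1 e2 ?tf_nuniq // tf_i /=; apply => j; rewrite !ffunE.
by apply: all2_nth => //; rewrite sz2.
Qed.

End Main.


Lemma restrE (A Q : finType) (H : {set {ffun Q -> A}}) (p q : Q) :
  restr H [set p; q] = [set g : {ffun {x : Q | x \in [set p; q]} -> A} | RR H p q (g (pt1 p q)) (g (pt2 p q))].
Proof.
apply/setP => g; rewrite inE; apply/imsetP/existsP.
  by case=> h hH ->; exists h; rewrite hH !ffunE /= !eqxx.
case=> h /andP[hH /andP[/eqP e1 /eqP e2]]; exists h => //.
apply/ffunP => -[x xP]; rewrite ffunE /=.
case/set2P: (xP) => ex; subst x.
  by have -> : exist _ p xP = pt1 p q by apply: val_inj.
by have -> : exist _ q xP = pt2 p q by apply: val_inj.
Qed.

Theorem lemma5 (A Q : finType) (H : {set {ffun Q -> A}}) (n : nat)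
    (F : forall k, {set op A k}) (p q : Q) :
  0 < #|A| -> 0 < #|Q| -> H != set0 -> 3 <= n ->
  is_clone F -> DeltaS n F -> inInv F H ->
  p != q -> ~~ ([set p; q] \subset Qn H n) ->
  restr H [set p; q] =
    [set g : {ffun {x : Q | x \in [set p; q]} -> A} | (g (pt1 p q) \in proj H p) && (g (pt2 p q) \in proj H q)]
  \/
  exists sigma : {perm A},
    restr H [set p; q] =
    [set g : {ffun {x : Q | x \in [set p; q]} -> A} | [&& g (pt1 p q) \in proj H p, g (pt2 p q) \in proj H q
              & g (pt2 p q) == sigma (g (pt1 p q))]].
Proof.
move=> _ _ _ n3 _ HD Hinv pq nsub.
rewrite restrE.
set X := proj H p; set Y := proj H q; set R := RR H p q.
have HRX : forall a b, R a b -> a \in X.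
  by move=> a b /existsP[h /andP[hH /andP[/eqP <- _]]]; apply/imsetP; exists h.
have HRY : forall a b, R a b -> b \in Y.
  by move=> a b /existsP[h /andP[hH /andP[_ /eqP <-]]]; apply/imsetP; exists h.
have HX : forall a, a \in X -> exists b, R a b.
  by move=> a /imsetP[h hH ->]; exists (h q); apply/existsP; exists h; rewrite hH !eqxx.
have HY : forall b, b \in Y -> exists a, R a b.
  by move=> b /imsetP[h hH ->]; exists (h p); apply/existsP; exists h; rewrite hH !eqxx.
have C1 := C1gen (p:=p) (q:=q) Hinv n3 HD.
have C2 := C2gen (p:=p) (q:=q) Hinv n3 HD.
have [r rin rnot] := subsetPn nsub.
rewrite /Qn inE -leqNgt in rnot.
have [full|[sigma Hs]] : (forall a b, a \in X -> b \in Y -> R a b) \/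
  exists sigma : {perm A}, forall a b, R a b = [&& a \in X, b \in Y & b == sigma a].
- case/set2P: rin => er; subst r.
    exact: (comb_X n3 HRX HRY HX HY C1 C2 rnot).
  have := comb_X (R := fun b a => R a b) n3 (fun b a r => HRY a b r) (fun b a r => HRX a b r) HY HX
     (fun su y0 sv s1 s2 s3 s4 => C2 y0 sv su s1 s2 s3 (etrans (all2_flip _ _ _) s4))
     (fun x0 su sv s1 s2 s3 s4 => C1 sv x0 su s1 s2 s3 (etrans (all2_flip _ _ _) s4)) rnot.
  case=> [full|[sigma Hs]].
    by left => a b aX bY; apply: full.
  right; exists sigma^-1%g => a b; rewrite Hs andbCA; congr [&& _, _ & _].
  apply/eqP/eqP => [->|->]; by rewrite ?permK ?permKV.
- left; apply/setP => g; rewrite !inE; apply/idP/andP => [rg|[a b]].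
    by split; [apply: (HRX _ (g (pt2 p q))) | apply: (HRY (g (pt1 p q)))].
  exact: full.
- right; exists sigma; apply/setP => g; rewrite !inE Hs //.
Qed.
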